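(* Let $(\Lambda V,\partial)$ be a simply connected free graded-commutative cochain algebra over $\mathbb{Q}$ with $V=V^{q}\oplus V^{\le n}$, where $q>n$. Let $\alpha,\alpha'\colon(\Lambda V,\partial)\to(\Lambda V,\partial)$ be cochain algebra morphisms such that $\alpha=\alpha'=\mathrm{id}$ on $V^{\le n}$ and, for $v\in V^q$, $\alpha(v)=v+z$ and $\alpha'(v)=v+z'$ (with $z,z'\in\Lambda V$ depending on $v$). Assume $z'-z=\partial(u)$ for some $u\in\Lambda V$. Then $\alpha$ and $\alpha'$ are homotopic.
   Context: Simply connected means $V^1=0$ (and $V^0=0$). Homotopy is defined as follows: let $\overline V,\widehat V$ be graded vector spaces with $(\overline V)^n=V^{n+1}$, $(\widehat V)^n=V^n$, and put on $\Lambda(V,\overline V,\widehat V)$ the differential $D(v)=\partial v$, $D(\widehat v)=0$, $D(\overline v)=\widehat v$. Let $S$ be the degree $-1$ derivation with $S(v)=\overline v$, $S(\overline v)=S(\widehat v)=0$, set $\theta=DS+SD$ and $e^{\theta}(v)=v+\widehat v+\sum_{n\ge1}\frac{1}{n!}(S\circ\partial)^n(v)$. Two morphisms $\alpha,\alpha'$ are homotopic if there is a cochain algebra morphism $F\colon(\Lambda(V,\overline V,\widehat V),D)\to(\Lambda V,\partial)$ with $F(v)=\alpha(v)$ and $F\circ e^{\theta}(v)=\alpha'(v)$ for all $v\in V$. *)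

(* Defs.v *)
From HB Require Import structures.
From mathcomp Require Import all_boot all_order all_algebra.
Set Implicit Arguments. Unset Strict Implicit. Unset Printing Implicit Defensive.
Import Order.TTheory GRing.Theory Num.Theory.
Local Open Scope ring_scope.

Section Defs.

(* (A, hom) is a graded-commutative Q-algebra: hom p a means "a is homogeneous
   of degree p", A = (+)_{p >= 0} A^p. *)
Definition is_gca (A : algType rat) (hom : nat -> A -> Prop) : Prop :=
  [/\ (forall p, hom p 0 /\ forall (c : rat) a b, hom p a -> hom p b -> hom p (c *: a + b)),
      hom 0%N 1,
      (forall p q a b, hom p a -> hom q b -> hom (p + q)%N (a * b)),
      (forall p q a b, hom p a -> hom q b -> a * b = (-1) ^+ (p * q) * (b * a)) &
      ((forall a : A, exists N (f : nat -> A),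
          (forall k, hom k (f k)) /\ a = \sum_(k < N) f k) /\
      (forall N (f : nat -> A), (forall k, hom k (f k)) ->
          \sum_(k < N) f k = 0 -> forall k, (k < N)%N -> f k = 0))].

Definition lin_map (A B : algType rat) (f : A -> B) : Prop :=
  forall (c : rat) a b, f (c *: a + b) = c *: f a + f b.

Definition is_cdga (A : algType rat) (hom : nat -> A -> Prop) (d : A -> A) : Prop :=
  [/\ is_gca hom, lin_map d,
      (forall p a, hom p a -> hom p.+1 (d a)),
      (forall p a b, hom p a -> d (a * b) = d a * b + (-1) ^+ p * (a * d b)) &
      (forall a, d (d a) = 0)].

Definition is_deriv_m1 (A : algType rat) (hom : nat -> A -> Prop) (S : A -> A) : Prop :=
  [/\ lin_map S,
      (forall p a, hom p.+1 a -> hom p (S a)),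
      (forall a, hom 0%N a -> S a = 0) &
      (forall p a b, hom p a -> S (a * b) = S a * b + (-1) ^+ p * (a * S b))].

Definition is_gca_mor (A B : algType rat) (homA : nat -> A -> Prop)
    (homB : nat -> B -> Prop) (F : A -> B) : Prop :=
  [/\ lin_map F, F 1 = 1, (forall a b, F (a * b) = F a * F b) &
      (forall p a, homA p a -> homB p (F a))].

Definition is_cdga_mor (A B : algType rat) (homA : nat -> A -> Prop) (dA : A -> A)
    (homB : nat -> B -> Prop) (dB : B -> B) (F : A -> B) : Prop :=
  is_gca_mor homA homB F /\ forall a, F (dA a) = dB (F a).

(* (A, hom) is the free graded-commutative algebra Lambda V on the graded space V
   with homogeneous basis x : I -> A, x i of degree deg i. *)
Definition is_free_gca (A : algType rat) (hom : nat -> A -> Prop)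
    (I : Type) (deg : I -> nat) (x : I -> A) : Prop :=
  [/\ is_gca hom, (forall i, hom (deg i) (x i)) &
      forall (B : algType rat) (homB : nat -> B -> Prop) (b : I -> B),
        is_gca homB -> (forall i, homB (deg i) (b i)) ->
        (exists F : A -> B, is_gca_mor hom homB F /\ forall i, F (x i) = b i) /\
        (forall F G : A -> B, is_gca_mor hom homB F -> is_gca_mor hom homB G ->
           (forall i, F (x i) = b i) -> (forall i, G (x i) = b i) ->
           forall a, F a = G a)].

Definition in_span (A : algType rat) (I : Type) (x : I -> A) (P : I -> Prop) (v : A) : Prop :=
  exists N (ix : 'I_N -> I) (c : 'I_N -> rat),
    (forall k, P (ix k)) /\ v = \sum_(k < N) c k *: x (ix k).

(* generators of Lambda(V, Vbar, Vhat): indices I + I + I *)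
Definition sum3 (I T : Type) (f g h : I -> T) : I + I + I -> T :=
  fun j => match j with inl (inl i) => f i | inl (inr i) => g i | inr i => h i end.

(* W = Lambda(V, Vbar, Vhat) with generators wv (= v), wb (= vbar), wh (= vhat),
   iota : Lambda V -> W the inclusion, D and S as in the paper.  The series
   e^theta(v) = v + vhat + sum_{n>=1} (S o D)^n (v) / n! is read as: the images
   under F of its partial sums are eventually equal to alpha'(v). *)
Definition homotopic (A : algType rat) (hom : nat -> A -> Prop) (d : A -> A)
    (I : Type) (deg : I -> nat) (x : I -> A) (al al' : A -> A) : Prop :=
  forall (W : algType rat) (homW : nat -> W -> Prop) (wv wb wh : I -> W)
         (iota : A -> W) (D S : W -> W),
    is_free_gca homW (sum3 deg (fun i => (deg i).-1) deg) (sum3 wv wb wh) ->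
    is_gca_mor hom homW iota -> (forall i, iota (x i) = wv i) ->
    is_cdga homW D ->
    (forall i, D (wv i) = iota (d (x i))) ->
    (forall i, D (wb i) = wh i) ->
    (forall i, D (wh i) = 0) ->
    is_deriv_m1 homW S ->
    (forall i, S (wv i) = wb i) ->
    (forall i, S (wb i) = 0) ->
    (forall i, S (wh i) = 0) ->
    exists F : W -> A,
      [/\ is_cdga_mor homW D hom d F,
          (forall i, F (wv i) = al (x i)) &
          (forall i, exists N0, forall N, (N0 <= N)%N ->
              F (wv i + wh i +
                 \sum_(1 <= k < N.+1) (k`!%:R : rat)^-1 *: iter k (S \o D) (wv i))
              = al' (x i))].

End Defs.

(* Main.v *)
Require Import Defs.
From HB Require Import structures.
From mathcomp Require Import all_boot all_order all_algebra.
From mathcomp Require Import boolp zify classical_sets.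
Import Order.TTheory GRing.Theory Num.Theory.
Set Implicit Arguments. Unset Strict Implicit. Unset Printing Implicit Defensive.
Local Open Scope ring_scope.

Section Gen.
Variables (W : algType rat) (J : Type) (dg : J -> nat) (g : J -> W) (P : J -> Prop).

Inductive HG : nat -> W -> Prop :=
| HG_gen j : P j -> HG (dg j) (g j)
| HG_one : HG 0 1
| HG_zero p : HG p 0
| HG_lin p c a b : HG p a -> HG p b -> HG p (c *: a + b)
| HG_mul p r a b : HG p a -> HG r b -> HG (p + r) (a * b).

Lemma HG_add p a b : HG p a -> HG p b -> HG p (a + b).
Proof. move=> ha hb; rewrite -[a]scale1r; exact: HG_lin. Qed.
Lemma HG_scale p c a : HG p a -> HG p (c *: a).
Proof. move=> ha; rewrite -[_ *: _]addr0; apply: HG_lin => //; exact: HG_zero. Qed.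
Lemma HG_sum p (I : Type) (r : seq I) (Q : pred I) (F : I -> W) :
  (forall i, Q i -> HG p (F i)) -> HG p (\sum_(i <- r | Q i) F i).
Proof. move=> H; apply: big_ind => //; [exact: HG_zero | exact: HG_add]. Qed.

Definition Gen (w : W) := exists N (f : nat -> W),
  (forall k, HG k (f k)) /\ w = \sum_(k < N) f k.

Lemma sum_pad N M (f : nat -> W) : (N <= M)%N ->
  \sum_(k < N) f k = \sum_(k < M) (if (k < N)%N then f k else 0).
Proof. by move=> le; rewrite (big_ord_widen M f le) big_mkcond. Qed.

Lemma sum_delta M m (a : W) : (m < M)%N ->
  \sum_(k < M) (if (k : nat) == m then a else 0) = a.
Proof. by move=> lt; rewrite -big_mkcond /= (big_pred1 (Ordinal lt)). Qed.

Lemma HG_Gen m a : HG m a -> Gen a.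
Proof.
move=> h; exists m.+1, (fun k => if k == m then a else 0); split.
  by move=> k; case: eqP => [->|_]; [exact h| exact: HG_zero].
by rewrite sum_delta.
Qed.
Arguments HG_Gen {m a}.

Lemma Gen0 : Gen 0.
Proof. by exists 0%N, (fun _ => 0); split; [move=> k; exact: HG_zero| rewrite big_ord0]. Qed.
Lemma Gen1 : Gen 1.
Proof. exact: HG_Gen HG_one. Qed.
Lemma GenD a b : Gen a -> Gen b -> Gen (a + b).
Proof.
move=> [N1 [f1 [h1 ->]]] [N2 [f2 [h2 ->]]].
exists (maxn N1 N2), (fun k => (if (k < N1)%N then f1 k else 0) + (if (k < N2)%N then f2 k else 0)).
split.
  move=> k; apply: HG_add; case: ifP => _; by [apply: h1|apply: h2|apply: HG_zero].
by rewrite big_split /= -(@sum_pad N1 _ f1 (leq_maxl N1 N2)) -(@sum_pad N2 _ f2 (leq_maxr N1 N2)).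
Qed.
Lemma GenZ c a : Gen a -> Gen (c *: a).
Proof.
move=> [N [f [h ->]]]; exists N, (fun k => c *: f k); split.
  by move=> k; apply: HG_scale.
by rewrite scaler_sumr.
Qed.
Lemma GenM a b : Gen a -> Gen b -> Gen (a * b).
Proof.
move=> [N1 [f1 [h1 ->]]] [N2 [f2 [h2 ->]]].
exists (N1 + N2)%N, (fun m => \sum_(k < N1) \sum_(l < N2 | (k + l == m)%N) f1 k * f2 l).
split.
  move=> m; apply: HG_sum => k _; apply: HG_sum => l /eqP <-; exact: HG_mul.
rewrite mulr_suml [RHS]exchange_big /=; apply: eq_bigr => k _.
rewrite mulr_sumr.
under [RHS]eq_bigr => m _ do rewrite big_mkcond.
rewrite [RHS]exchange_big /=; apply: eq_bigr => l _.
under eq_bigr => m _ do rewrite eq_sym.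
rewrite sum_delta //.
have := ltn_ord k; have := ltn_ord l; lia.
Qed.

Definition genb : pred W := fun w => `[< Gen w >].
Lemma genb_closed : GRing.subsemialg_closed genb.
Proof.
split.
- apply/asboolP; exact: Gen1.
- split; [apply/asboolP; exact Gen0 | move=> a b /asboolP ha /asboolP hb; apply/asboolP; exact: GenD].
- move=> c a /asboolP ha; apply/asboolP; exact: GenZ.
- move=> a b /asboolP ha /asboolP hb; apply/asboolP; exact: GenM.
Qed.
Record SubT := MkSub { sv : W; svP : genb sv }.
HB.instance Definition _ := [isSub for sv].
HB.instance Definition _ := [Choice of SubT by <:].
HB.instance Definition _ := GRing.SubChoice_isSubAlgebra.Build rat W genb SubT genb_closed.

Lemma valD (a b : SubT) : val (a + b) = val a + val b. Proof. by []. Qed.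
Lemma valM (a b : SubT) : val (a * b) = val a * val b. Proof. by []. Qed.
Lemma valZ c (a : SubT) : val (c *: a) = c *: val a. Proof. by []. Qed.
Lemma val1 : val (1 : SubT) = 1. Proof. by []. Qed.
Lemma val0 : val (0 : SubT) = 0. Proof. by []. Qed.
Lemma valN (a : SubT) : val (- a) = - val a. Proof. by []. Qed.
Lemma val_sign n : val ((-1) ^+ n : SubT) = (-1) ^+ n.
Proof. elim: n => [|n IH]; first by []. by rewrite !exprS valM IH. Qed.
Lemma val_sum N (f : nat -> SubT) : val (\sum_(k < N) f k) = \sum_(k < N) val (f k).
Proof. exact: (big_morph val valD val0). Qed.

Lemma HG_hom (hom : nat -> W -> Prop) : is_gca hom ->
  (forall j, P j -> hom (dg j) (g j)) -> forall p a, HG p a -> hom p a.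
Proof.
move=> [h1 h2 h3 _ _] hg p a; elim => //.
- by move=> q; case: (h1 q).
- by move=> q c x y _ hx _ hy; case: (h1 q) => _; apply.
- by move=> q r x y _ hx _ hy; apply: h3.
Qed.

Lemma all_gen (hom : nat -> W -> Prop) : is_free_gca hom dg g -> (forall j, P j) ->
  forall w, Gen w.
Proof.
move=> [gca hg univ] allP.
have HGh := @HG_hom hom gca (fun j _ => hg j).
pose homS p (s : SubT) := hom p (val s).
have gcaS : is_gca homS.
  case: (gca) => [h1 h2 h3 h4 [h5 h6]]; split.
  - move=> p; case: (h1 p) => z l; split; first by rewrite /homS val0.
    by move=> c a b; rewrite /homS valD valZ; apply: l.
  - by rewrite /homS val1.
  - by move=> p q a b; rewrite /homS valM; apply: h3.
  - move=> p q a b ha hb; apply: val_inj; rewrite !valM val_sign; exact: h4.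
  split.
  - move=> s; have /asboolP [N [f [hf e]]] := svP s.
    pose f' k := @MkSub (f k) (introT (asboolP _) (HG_Gen (hf k))).
    exists N, f'; split; first by move=> k; rewrite /homS /=; apply: HGh (hf k).
    by apply: val_inj; rewrite val_sum.
  - move=> N f hf e k lt; apply: val_inj; rewrite val0.
    apply: (h6 N (fun k => val (f k))) => //.
    by rewrite -val_sum e.
pose bS j := @MkSub (g j) (introT (asboolP _) (HG_Gen (HG_gen (allP j)))).
have [[G [Gm GE]] _] := univ _ homS bS gcaS (fun j => hg j).
have [_ uniq] := univ _ hom g gca hg.
move=> w.
have e : val (G w) = w.
  apply: (uniq (fun w => val (G w)) id) => //.
  - case: Gm => [l o m h]; split.
    + by move=> c a b; rewrite l valD valZ.
    + by rewrite o.
    + by move=> a b; rewrite m valM.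
    + by move=> p a ha; apply: (h p a ha).
  - by move=> j; rewrite GE.
by rewrite -e; apply/asboolP; apply: svP.
Qed.

Lemma hom_HG (hom : nat -> W -> Prop) : is_gca hom -> (forall j, P j -> hom (dg j) (g j)) ->
  forall m a, hom m a -> Gen a -> HG m a.
Proof.
move=> gca hg m a ha [N [f [hf e]]].
have [h1 _ _ _ [_ h6]] := gca.
have HGh := @HG_hom hom gca hg.
pose M := maxn N m.+1.
pose f' k := if (k < N)%N then f k else 0.
pose g' k := (-1) *: (if k == m then a else 0) + f' k.
have hg' : forall k, hom k (g' k).
  move=> k; case: (h1 k) => z l; apply: l.
  - by case: eqP => [->|_].
  - rewrite /f'; case: ifP => _ //; exact: HGh (hf k).
have s0 : \sum_(k < M) g' k = 0.
  rewrite big_split /= -scaler_sumr sum_delta ?leq_maxr //.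
  rewrite -(@sum_pad N M f (leq_maxl _ _)) -e.
  by rewrite scaleN1r addNr.
have := h6 M g' hg' s0 m (leq_maxr _ _).
rewrite /g' eqxx scaleN1r => /eqP; rewrite addrC subr_eq0 => /eqP <-.
rewrite /f'; case: ifP => _; [exact: hf | exact: HG_zero].
Qed.
End Gen.

Lemma HG_cast (W : algType rat) (J : Type) (dg : J -> nat) (g : J -> W) (P : J -> Prop) p p' a :
  p = p' -> HG dg g P p a -> HG dg g P p' a.
Proof. by move=> ->. Qed.


Section Lin.
Variables (A B : algType rat) (f : A -> B) (l : lin_map f).
Lemma lin0 : f 0 = 0.
Proof.
have := l 1 0 0; rewrite !scale1r addr0 => e.
by apply: (@addrI _ (f 0)); rewrite addr0 -e.
Qed.
Lemma linD a b : f (a + b) = f a + f b.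
Proof. by have := l 1 a b; rewrite !scale1r. Qed.
Lemma linZ c a : f (c *: a) = c *: f a.
Proof. by have := l c a 0; rewrite !addr0 lin0 addr0. Qed.
Lemma linN a : f (- a) = - f a.
Proof. by rewrite -scaleN1r linZ scaleN1r. Qed.
Lemma linB a b : f (a - b) = f a - f b.
Proof. by rewrite linD linN. Qed.
Lemma lin_sum (I : Type) (r : seq I) (P : pred I) (F : I -> A) :
  f (\sum_(i <- r | P i) F i) = \sum_(i <- r | P i) f (F i).
Proof. exact: (big_morph f linD lin0). Qed.
End Lin.

Lemma sign_mulE (R : algType rat) n (a : R) : (-1) ^+ n * a = ((-1) ^+ n : rat) *: a.
Proof. by rewrite -[in LHS]signr_odd -[in RHS]signr_odd scaler_sign; case: (odd n); rewrite ?expr1 ?expr0 ?mulN1r ?mul1r. Qed.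

Lemma mor_sign (A B : algType rat) (hA : nat -> A -> Prop) (hB : nat -> B -> Prop) F n a :
  is_gca_mor hA hB F -> F ((-1) ^+ n * a) = (-1) ^+ n * F a.
Proof. by case=> l _ _ _; rewrite !sign_mulE linZ. Qed.

Lemma mor0 (A B : algType rat) (hA : nat -> A -> Prop) (hB : nat -> B -> Prop) F :
  is_gca_mor hA hB F -> F 0 = 0.
Proof. by case=> l _ _ _; apply: lin0. Qed.

Lemma cdga_d1 (A : algType rat) (h : nat -> A -> Prop) d : is_cdga h d -> d 1 = 0.
Proof.
case=> [[_ h1 _ _ _] _ _ hm _].
have := hm 0%N 1 1 h1; rewrite !mulr1 expr0 !mul1r => e.
by apply: (@addrI _ (d 1)); rewrite addr0 -e.
Qed.


Lemma shuf (V : lmodType rat) (t : rat) (X X' Y U Z Z' : V) : t * t = 1 ->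
 ((X + t*:Y) + (-t)*:(U + (-t)*:Z)) + ((X' + t*:U) + (-t)*:(Y + (-t)*:Z')) = (X + X') + (Z + Z').
Proof.
move=> tt.
rewrite !scalerDr !scalerA mulrNN tt !scale1r !scaleNr.
set a := t *: Y. set b := t *: U.
rewrite (addrC (-b)) (addrC (-a)).
rewrite -!addrA; congr (_ + _).
rewrite !addrA -(addrA _ X' b) (addrC X' b) addrA subrK.
by rewrite addrC !addrA addNr add0r (addrC Z).
Qed.

Lemma sq_sign n : ((-1) ^+ n : rat) * (-1) ^+ n = 1.
Proof. by rewrite -expr2 sqrr_sign. Qed.

Lemma free_ind (W : algType rat) (hom : nat -> W -> Prop) (J : Type) (dg : J -> nat)
    (g : J -> W) (Q : W -> Prop) :
  is_free_gca hom dg g -> Q 0 -> (forall a b, Q a -> Q b -> Q (a + b)) ->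
  (forall p a, HG dg g (fun _ => True) p a -> Q a) -> forall w, Q w.
Proof.
move=> fr Q0 QD QH w.
have [N [f [hf ->]]] := all_gen fr (fun _ => I) w.
by apply: big_ind => // k _; exact: QH (hf k).
Qed.

Lemma der_rule (W : algType rat) (hom : nat -> W -> Prop) D p a b :
  is_cdga hom D -> hom p a -> D (a * b) = D a * b + ((-1) ^+ p : rat) *: (a * D b).
Proof. by case=> _ _ _ h _ ha; rewrite (h p a b ha) sign_mulE. Qed.

Lemma Sder_rule (W : algType rat) (hom : nat -> W -> Prop) S p a b :
  is_deriv_m1 hom S -> hom p a -> S (a * b) = S a * b + ((-1) ^+ p : rat) *: (a * S b).
Proof. by case=> _ _ _ h ha; rewrite (h p a b ha) sign_mulE. Qed.

Lemma deriv_ext (W A : algType rat) (homW : nat -> W -> Prop) (J : Type) (dg : J -> nat)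
    (g : J -> W) (homA : nat -> A -> Prop) D d F :
  is_free_gca homW dg g -> is_cdga homW D -> is_cdga homA d -> is_gca_mor homW homA F ->
  (forall j, F (D (g j)) = d (F (g j))) -> forall w, F (D w) = d (F w).
Proof.
move=> fr cW cA Fm hg.
have [gca hgW _] := fr.
have [_ lD _ _ _] := cW.
have [_ ld _ _ _] := cA.
have [lF F1 FM Fh] := Fm.
apply: free_ind fr _ _ _.
- by rewrite (lin0 lD) (lin0 lF) (lin0 ld).
- by move=> a b e1 e2; rewrite (linD lD) (linD lF) (linD lF) (linD ld) e1 e2.
move=> p a; elim => //.
- by rewrite (cdga_d1 cW) F1 (cdga_d1 cA) (lin0 lF).
- by move=> q; rewrite (lin0 lD) (lin0 lF) (lin0 ld).
- by move=> q c x y _ ex _ ey; rewrite lD lF ex ey lF ld.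
- move=> q r x y hx ex hy ey.
  have hxW := HG_hom gca (fun j _ => hgW j) hx.
  rewrite (der_rule _ cW hxW) (linD lF) (linZ lF) !FM ex ey.
  by rewrite (der_rule _ cA (Fh _ _ hxW)).
Qed.

Section SW.
Variables (W : algType rat) (homW : nat -> W -> Prop) (J : Type) (dg : J -> nat)
  (g : J -> W) (D S : W -> W).
Hypotheses (fr : is_free_gca homW dg g) (cW : is_cdga homW D) (dS : is_deriv_m1 homW S).

Lemma S0 : S 0 = 0.
Proof. by case: dS => l _ _ _; apply: lin0. Qed.
Lemma S1 : S 1 = 0.
Proof. by case: dS => _ _ h _; apply: h; case: fr => [[_ h1 _ _ _] _ _]. Qed.

Lemma SS0 : (forall j, S (S (g j)) = 0) -> forall w, S (S w) = 0.
Proof.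
move=> hg.
have [gca hgW _] := fr.
have [lS Sdeg Sz _] := dS.
apply: free_ind fr _ _ _.
- by rewrite !S0.
- by move=> a b e1 e2; rewrite !(linD lS) e1 e2 addr0.
move=> p a; elim => //.
- by rewrite S1 S0.
- by move=> q; rewrite !S0.
- by move=> q c x y _ ex _ ey; rewrite !lS ex ey scaler0 addr0.
- move=> q r x y hx ex hy ey.
  have hxW := HG_hom gca (fun j _ => hgW j) hx.
  rewrite (Sder_rule _ dS hxW) (linD lS) (linZ lS).
  case: q hx hxW => [|q] hx hxW.
    by rewrite (Sz _ hxW) mul0r S0 add0r (Sder_rule _ dS hxW) (Sz _ hxW) mul0r add0r ey mulr0 !scaler0.
  rewrite (Sder_rule _ dS (Sdeg _ _ hxW)) (Sder_rule _ dS hxW) ex mul0r add0r ey mulr0 scaler0 addr0.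

  by rewrite exprS mulN1r scaleNr addrN.
Qed.

Definition theta w := D (S w) + S (D w).

Lemma theta_der p a b : homW p a -> theta (a * b) = theta a * b + a * theta b.
Proof.
move=> ha.
have [gca hgW _] := fr.
have [_ lD Ddeg _ _] := cW.
have [lS Sdeg Sz _] := dS.
rewrite /theta (Sder_rule _ dS ha) (der_rule _ cW ha).
case: p ha => [|p] ha.
  rewrite (Sz _ ha) mul0r add0r ?(linD lD) ?(linD lS) ?(linZ lD) ?(linZ lS) expr0 !scale1r.
  rewrite (der_rule _ cW ha) (Sder_rule _ dS (Ddeg _ _ ha)) (Sder_rule _ dS ha) (Sz _ ha).
  rewrite (lin0 lD) mul0r add0r expr1 scaleN1r !mulrDl !mulrDr.
  rewrite expr0 !scale1r mul0r add0r [S (D a) * b - _ + _]addrAC addrC.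
  by rewrite (addrC (D a * S b)) -addrA addNKr addrCA.
rewrite !(linD lD) !(linD lS) !(linZ lD) !(linZ lS).
rewrite (der_rule _ cW (Sdeg _ _ ha)) (der_rule _ cW ha).
rewrite (Sder_rule _ dS (Ddeg _ _ ha)) (Sder_rule _ dS ha).
rewrite !exprS !mulN1r.
rewrite opprK.
rewrite shuf; last exact: sq_sign.
by rewrite mulrDl mulrDr.
Qed.
End SW.


Section MainA.
Variables (A : algType rat) (hom : nat -> A -> Prop) (d : A -> A) (I : Type)
  (deg : I -> nat) (x : I -> A) (q n : nat).
Hypotheses (cA : is_cdga hom d) (frA : is_free_gca hom deg x)
  (deg2 : forall i, (2 <= deg i)%N) (degC : forall i, deg i = q \/ (deg i <= n)%N)
  (nq : (n < q)%N).

Definition HGlow := HG deg x (fun i => (deg i <= n)%N).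
Definition HGall := HG deg x (fun _ => True).

Inductive Span : A -> Prop :=
| Sp_gen j : deg j = q -> Span (x j)
| Sp_zero : Span 0
| Sp_lin c a b : Span a -> Span b -> Span (c *: a + b).

Lemma Span_scale c a : Span a -> Span (c *: a).
Proof. by move=> h; rewrite -[_ *: _]addr0; apply: Sp_lin h Sp_zero. Qed.

Lemma shape p a : HGall p a ->
  [/\ ((p <= q.+1)%N -> exists l v, [/\ HGlow p l, Span v, (p = q \/ v = 0) & a = l + v]),
      (p = 0%N -> exists c, a = c *: 1) & (p = 1%N -> a = 0)].
Proof.
elim => {p a}.
- move=> j _; split => [_|e|e]; last 2 first.
  + by have := deg2 j; rewrite e.
  + by have := deg2 j; rewrite e.
  case: (degC j) => hj.
  + exists 0, (x j); split; [exact: HG_zero | exact: Sp_gen | by left | by rewrite add0r].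
  + exists (x j), 0; split; [exact: HG_gen | exact: Sp_zero | by right | by rewrite addr0].
- split => [_|_|//].
  + exists 1, 0; split; [exact: HG_one | exact: Sp_zero | by right | by rewrite addr0].
  + by exists 1; rewrite scale1r.
- move=> p; split => [_|_|_] //.
  + exists 0, 0; split; [exact: HG_zero | exact: Sp_zero | by right | by rewrite addr0].
  + by exists 0; rewrite scale0r.
- move=> p c a b _ [Ia Ia0 Ia1] _ [Ib Ib0 Ib1]; split.
  + move=> hp; have [la [va [hla hva ea ->]]] := Ia hp; have [lb [vb [hlb hvb eb ->]]] := Ib hp.
    exists (c *: la + lb), (c *: va + vb); split.
    * exact: HG_lin.
    * exact: Sp_lin.
    * case: ea => [->|->]; first by left. case: eb => [->|->]; first by left.
      by right; rewrite scaler0 addr0.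
    * by rewrite scalerDr addrACA.
  + move=> e; have [ca ->] := Ia0 e; have [cb ->] := Ib0 e.
    by exists (c * ca + cb); rewrite scalerA scalerDl.
  + by move=> e; rewrite (Ia1 e) (Ib1 e) scaler0 addr0.
- move=> p r a b _ [Ia Ia0 Ia1] _ [Ib Ib0 Ib1]; split.
  + move=> hpr.
    case: p Ia Ia0 Ia1 hpr => [|[|p]] Ia Ia0 Ia1 hpr.
    * have [ca ->] := Ia0 erefl. have [lb [vb [hlb hvb eb ->]]] := Ib hpr.
      exists (ca *: lb), (ca *: vb); split.
      -- exact: HG_scale.
      -- exact: Span_scale.
      -- by case: eb => [->|->]; [left | right; rewrite scaler0].
      -- by rewrite -scalerAl mul1r scalerDr.
    * rewrite (Ia1 erefl) mul0r; exists 0, 0.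
      by split; [exact: HG_zero | exact: Sp_zero | right | rewrite addr0].
    * case: r Ib Ib0 Ib1 hpr => [|[|r]] Ib Ib0 Ib1 hpr.
      -- have [cb ->] := Ib0 erefl.
         have hp : (p.+2 <= q.+1)%N by lia.
         have [la [va [hla hva ea ->]]] := Ia hp.
         exists (cb *: la), (cb *: va); split.
         ++ by rewrite addn0; exact: HG_scale.
         ++ exact: Span_scale.
         ++ by case: ea => [->|->]; [left; rewrite addn0 | right; rewrite scaler0].
         ++ by rewrite -scalerAr mulr1 scalerDr.
      -- rewrite (Ib1 erefl) mulr0; exists 0, 0.
         by split; [exact: HG_zero | exact: Sp_zero | right | rewrite addr0].
      -- have hp : (p.+2 <= q.+1)%N by lia.
         have hr : (r.+2 <= q.+1)%N by lia.
         have [la [va [hla hva ea ->]]] := Ia hp.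
         have [lb [vb [hlb hvb eb ->]]] := Ib hr.
         have -> : va = 0 by case: ea => // e; exfalso; lia.
         have -> : vb = 0 by case: eb => // e; exfalso; lia.
         exists (la * lb), 0; split.
         ++ exact: HG_mul.
         ++ exact: Sp_zero.
         ++ by right.
         ++ by rewrite !addr0.
  + move=> e; have [hp hr] : p = 0%N /\ r = 0%N by lia.
    subst p r; have [ca ->] := Ia0 erefl; have [cb ->] := Ib0 erefl.
    by exists (ca * cb); rewrite -scalerAl mul1r scalerA.
  + move=> e; have [[hp hr]|[hp hr]] : (p = 0%N /\ r = 1%N) \/ (p = 1%N /\ r = 0%N) by lia.
    * by subst p r; rewrite (Ib1 erefl) mulr0.
    * by subst p r; rewrite (Ia1 erefl) mul0r.
Qed.

Lemma shape_hom m a : hom m a -> (m <= q.+1)%N ->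
  exists l v, [/\ HGlow m l, Span v, (m = q \/ v = 0) & a = l + v].
Proof.
move=> ha hm.
have [gca hg _] := frA.
have hG : HGall m a.
  apply: (hom_HG gca (fun j _ => hg j) ha).
  exact: (all_gen frA (fun _ => Logic.I) a).
by have [h _ _] := shape hG; apply: h.
Qed.

Lemma in_span1 (P : I -> Prop) j : P j -> in_span x P (x j).
Proof.
move=> h; exists 1%N, (fun _ => j), (fun _ => 1); split => //.
by rewrite big_ord1 scale1r.
Qed.

Lemma fix_low (f : A -> A) : is_gca_mor hom hom f ->
  (forall i, (deg i <= n)%N -> f (x i) = x i) -> forall p l, HGlow p l -> f l = l.
Proof.
move=> [lf f1 fm _] hf p l; elim => //.
- by move=> r; apply: (lin0 lf).
- by move=> r c a b _ ea _ eb; rewrite lf ea eb.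
- by move=> r s a b _ ea _ eb; rewrite fm ea eb.
Qed.
End MainA.


Lemma comp_eq (W : algType rat) (hom : nat -> W -> Prop) m y M (G : nat -> W) :
  is_gca hom -> hom m y -> (forall k, hom k (G k)) -> y = \sum_(k < M) G k ->
  y = if (m < M)%N then G m else 0.
Proof.
move=> gca hy hG e.
have [h1 _ _ _ [_ h6]] := gca.
pose M' := maxn M m.+1.
pose G' k := if (k < M)%N then G k else 0.
pose g' k := (-1) *: (if k == m then y else 0) + G' k.
have hg' : forall k, hom k (g' k).
  move=> k; case: (h1 k) => z l; apply: l.
  - by case: eqP => [->|_].
  - by rewrite /G'; case: ifP.
have s0 : \sum_(k < M') g' k = 0.
  rewrite big_split /= -scaler_sumr (@sum_delta W) ?leq_maxr //.
  rewrite -(@sum_pad W M M' G (leq_maxl _ _)) -e.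
  by rewrite scaleN1r addNr.
have := h6 M' g' hg' s0 m (leq_maxr _ _).
by rewrite /g' eqxx scaleN1r => /eqP; rewrite addrC subr_eq0 => /eqP <-.
Qed.

Section MainB.
Variables (A : algType rat) (hom : nat -> A -> Prop) (d : A -> A) (I : Type)
  (deg : I -> nat) (x : I -> A) (q n : nat) (al al' : A -> A).
Hypotheses (cA : is_cdga hom d) (frA : is_free_gca hom deg x)
  (deg2 : forall i, (2 <= deg i)%N) (degC : forall i, deg i = q \/ (deg i <= n)%N)
  (nq : (n < q)%N) (alm : is_cdga_mor hom d hom d al) (alm' : is_cdga_mor hom d hom d al')
  (hlow : forall v, in_span x (fun i => (deg i <= n)%N) v -> al v = v /\ al' v = v)
  (hq : forall v, in_span x (fun i => deg i = q) v -> exists u, (al' v - v) - (al v - v) = d u).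

Lemma hom_lin p c a b : hom p a -> hom p b -> hom p (c *: a + b).
Proof. by case: cA => [[h1 _ _ _ _] _ _ _ _] ha hb; case: (h1 p) => _; apply. Qed.
Lemma hom0 p : hom p 0.
Proof. by case: cA => [[h1 _ _ _ _] _ _ _ _]; case: (h1 p). Qed.
Lemma hom_sub p a b : hom p a -> hom p b -> hom p (a - b).
Proof. by move=> ha hb; rewrite -scaleN1r addrC; apply: hom_lin. Qed.

Lemma proj_d m u : (1 <= m)%N -> hom m (d u) -> exists u', hom m.-1 u' /\ d u = d u'.
Proof.
have [gca ld dh _ _] := cA.
have [h1 _ _ _ [h5 _]] := gca.
move=> m1 hy.
have [N [f [hf eu]]] := h5 u.
pose G k := if k is k'.+1 then d (f k') else 0.
have hG : forall k, hom k (G k).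
  by case => [|k] /=; [exact: hom0 | exact: dh (hf k)].
have e : d u = \sum_(k < N.+1) G k.
  by rewrite big_ord_recl /= add0r eu (lin_sum ld).
have := comp_eq gca hy hG e.
case: m m1 hy => // m _ hy.
case: ifP => _ He.
- by exists (f m); split.
- by exists 0; split; [exact: hom0 | rewrite He (lin0 ld)].
Qed.

Definition Kset v := Span deg x q v /\ exists i l,
  [/\ (deg i <= n)%N, HGlow deg x n (deg i).+1 l & d (x i) = l + v].

Lemma al_low f : is_cdga_mor hom d hom d f ->
  (forall v, in_span x (fun i => (deg i <= n)%N) v -> f v = v) -> forall v, Kset v -> f v = v.
Proof.
move=> [fm fd] hf v [_ [i [l [hi hl e]]]].
have ev : v = d (x i) - l by rewrite e addrC addKr.
have [lf _ _ _] := fm.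
rewrite ev (linB lf) fd (hf _ (in_span1 x hi)) (fix_low fm _ hl) //.
by move=> j hj; apply: hf; apply: in_span1.
Qed.

Definition good (X : A * A -> Prop) :=
 [/\ forall v, Kset v -> X (v, 0),
     X (0, 0),
     forall c a b a' b', X (a, b) -> X (a', b') -> X (c *: a + a', c *: b + b'),
     forall w, X (0, w) -> w = 0 &
     forall v w, X (v, w) -> [/\ Span deg x q v, hom q.-1 w & d w = al' v - al v]].

Inductive R0 : A * A -> Prop :=
| R0k v : Kset v -> R0 (v, 0)
| R0z : R0 (0, 0)
| R0l c a b a' b' : R0 (a, b) -> R0 (a', b') -> R0 (c *: a + a', c *: b + b').

Lemma good_R0 : good R0.
Proof.
have [[[la _ _ _] _] [[la' _ _ _] _]] := (alm, alm').
have [_ ld _ _ _] := cA.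
have inv : forall z, R0 z -> [/\ Span deg x q z.1, z.2 = 0 & al' z.1 = al z.1].
  move=> z; elim => {z}.
  - move=> v kv; split => //; first by case: kv.
    by rewrite (al_low alm' (fun v h => proj2 (hlow h)) kv) (al_low alm (fun v h => proj1 (hlow h)) kv).
  - by split => //; [exact: Sp_zero | rewrite (lin0 la) (lin0 la')].
  - move=> c a b a' b' _ [sa ea fa] _ [sa' ea' fa']; split => /=.
    + exact: Sp_lin.
    + by rewrite /= in ea ea'; rewrite ea ea' scaler0 addr0.
    + by rewrite /= in fa fa'; rewrite la la' fa fa'.
split.
- by move=> v kv; apply: R0k.
- exact: R0z.
- by move=> c a b a' b' h h'; apply: R0l.
- by move=> w /inv [].
- move=> v w /inv [/= sv -> e]; split => //; first exact: hom0.
  by rewrite e subrr (lin0 ld).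
Qed.

Lemma M_exists : exists M, good M /\ forall j, deg j = q -> exists w, M (x j, w).
Proof.
have [[[la _ _ lh] _] [[la' _ _ lh'] _]] := (alm, alm').
have [_ ld dh _ _] := cA.
have [_ hgx _] := frA.
have [M [PM maxM]] : exists M, ((forall z, ~ M z) \/ good M) /\
    forall B, proper M B -> ~ ((forall z, ~ B z) \/ good B).
  apply: (@Zorn_bigcup (A * A) (fun X => (forall z, ~ X z) \/ good X)).
  move=> F FP Ftot.
  case: (pselect (exists X, F X /\ good X)) => [[X0 [FX0 gX0]]|nog]; last first.
    left => z [X FX Xz]; case: (FP X FX) => [e|g]; first exact: e Xz.
    by apply: nog; exists X.
  right.
  have helper : forall X z, F X -> X z -> good X.
    by move=> X z FX Xz; case: (FP X FX) => // e; case: (e z Xz).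
  have [g0 g1 g2 g3 g4] := gX0.
  split.
  - by move=> v kv; exists X0 => //; apply: g0.
  - by exists X0.
  - move=> c a b a' b' [X1 FX1 h1] [X2 FX2 h2].
    case: (Ftot X1 X2 FX1 FX2) => sub.
    + have h1' := sub _ h1; have [_ _ cl _ _] := helper _ _ FX2 h2.
      by exists X2 => //; apply: cl.
    + have h2' := sub _ h2; have [_ _ cl _ _] := helper _ _ FX1 h1.
      by exists X1 => //; apply: cl.
  - by move=> w [X FX h]; have [_ _ _ z _] := helper _ _ FX h; apply: z.
  - by move=> v w [X FX h]; have [_ _ _ _ z] := helper _ _ FX h; apply: z.
have gM : good M.
  case: PM => // em; exfalso.
  apply: (maxM R0); last by right; exact: good_R0.
  split; first by move=> z /em.
  by move=> sub; apply: (em (0, 0)); apply: sub; exact: R0z.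
exists M; split => // j hj.
case: (pselect (exists w, M (x j, w))) => // nw; exfalso.
have [g0 g1 g2 g3 g4] := gM.
have [u0 Hu0] := hq (in_span1 x (P := fun i => deg i = q) hj).
have e0 : d u0 = al' (x j) - al (x j) by rewrite -Hu0 opprB addrA subrK.
have q1 : (1 <= q)%N by lia.
have hqq : hom q (d u0).
  by rewrite e0; apply: hom_sub; [apply: lh'|apply: lh]; rewrite -hj; apply: hgx.
have [u [hu eu]] := proj_d q1 hqq.
rewrite e0 in eu.
pose M' z := exists c v w, M (v, w) /\ z = (v + c *: x j, w + c *: u).
apply: (maxM M').
  split.
  - by move=> [v w] h; exists 0, v, w; split => //; rewrite !scale0r !addr0.
  - move=> sub; apply: nw; exists u.
    have : M' (x j, u) by exists 1, 0, 0; split => //; rewrite !add0r !scale1r.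
    by move/sub.
right; split.
- by move=> v kv; exists 0, v, 0; split; [apply: g0 | rewrite !scale0r !addr0].
- by exists 0, 0, 0; split => //; rewrite !scale0r !addr0.
- move=> c a b a' b' [c1 [v1 [w1 [M1 e1]]]] [c2 [v2 [w2 [M2 e2]]]].
  case: e1 => -> ->; case: e2 => -> ->.
  exists (c * c1 + c2), (c *: v1 + v2), (c *: w1 + w2); split; first exact: g2.
  by congr pair; rewrite scalerDr scalerA scalerDl addrACA.
- move=> w' [c [v [w [Mvw e]]]]; case: e => e1 e2.
  have [c0|cn0] := eqVneq c 0.
    rewrite c0 scale0r addr0 in e1; rewrite e2 c0 scale0r addr0.
    by apply: g3; rewrite e1.
  exfalso; apply: nw; exists ((- c^-1) *: w + 0).
  have ev : v = - (c *: x j) by apply/eqP; rewrite -addr_eq0 -e1.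
  have -> : x j = (- c^-1) *: v + 0.
    by rewrite addr0 ev scaleNr scalerN opprK scalerA mulVf // scale1r.
  by apply: g2 => //.
- move=> v' w' [c [v [w [Mvw e]]]]; case: e => -> ->.
  have [sv hw dw] := g4 _ _ Mvw.
  split.
  + by rewrite addrC; apply: Sp_lin => //; apply: Sp_gen.
  + by rewrite addrC; apply: hom_lin.
  + rewrite (linD ld) (linZ ld) dw -eu (linD la) (linD la') (linZ la) (linZ la').
    by rewrite scalerBr opprD addrACA.
Qed.

Lemma tau_exists : exists tau : A -> A,
  [/\ forall v, Span deg x q v -> hom q.-1 (tau v) /\ d (tau v) = al' v - al v,
      forall c a b, Span deg x q a -> Span deg x q b -> tau (c *: a + b) = c *: tau a + tau b &
      forall v, Kset v -> tau v = 0].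
Proof.
have [M [[g0 g1 g2 g3 g4] full]] := M_exists.
have all : forall v, Span deg x q v -> exists w, M (v, w).
  move=> v; elim => {v}.
  - by move=> j hj; apply: full.
  - by exists 0.
  - by move=> c a b _ [wa ha] _ [wb hb]; exists (c *: wa + wb); apply: g2.
have uniq : forall v w1 w2, M (v, w1) -> M (v, w2) -> w1 = w2.
  move=> v w1 w2 h1 h2.
  have := g2 (-1) _ _ _ _ h1 h2; rewrite !scaleN1r addNr => /g3 /eqP.
  by rewrite addrC subr_eq0 => /eqP.
pose tau v := match pselect (exists w, M (v, w)) with
              | left h => proj1_sig (cid h) | right _ => 0 end.
have tauP : forall v, Span deg x q v -> M (v, tau v).
  move=> v sv; rewrite /tau; case: pselect => [h|nh].
  - exact: (proj2_sig (cid h)).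
  - by exfalso; apply: nh; apply: all.
exists tau; split.
- by move=> v sv; have [_ ? ?] := g4 _ _ (tauP v sv).
- move=> c a b sa sb; apply: (uniq (c *: a + b)); first exact: tauP (Sp_lin c sa sb).
  by apply: g2; apply: tauP.
- move=> v kv; apply: (uniq v); first by apply: tauP; case: kv.
  exact: g0.
Qed.
End MainB.


Lemma mor_comp (A B C : algType rat) (hA : nat -> A -> Prop) (hB : nat -> B -> Prop)
  (hC : nat -> C -> Prop) f g :
  is_gca_mor hA hB f -> is_gca_mor hB hC g -> is_gca_mor hA hC (fun a => g (f a)).
Proof.
move=> [lf f1 fm fh] [lg g1 gm gh]; split.
- by move=> c a b; rewrite lf lg.
- by rewrite f1 g1.
- by move=> a b; rewrite fm gm.
- by move=> p a ha; apply: gh; apply: fh.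
Qed.

Section MainC.
Variables (A : algType rat) (hom : nat -> A -> Prop) (d : A -> A) (I : Type)
  (deg : I -> nat) (x : I -> A) (q n : nat) (al al' : A -> A).
Hypotheses (cA : is_cdga hom d) (frA : is_free_gca hom deg x)
  (deg2 : forall i, (2 <= deg i)%N) (degC : forall i, deg i = q \/ (deg i <= n)%N)
  (nq : (n < q)%N) (alm : is_cdga_mor hom d hom d al) (alm' : is_cdga_mor hom d hom d al')
  (hlow : forall v, in_span x (fun i => (deg i <= n)%N) v -> al v = v /\ al' v = v)
  (hq : forall v, in_span x (fun i => deg i = q) v -> exists u, (al' v - v) - (al v - v) = d u).

Lemma main : homotopic hom d deg x al al'.
Proof.
have [tau [t1 t2 t3]] := tau_exists cA frA nq alm alm' hlow hq.
have [gcaA hgx univA] := frA.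
have [[lal al1 alM alh] ald] := alm.
have [[lal' al1' alM' alh'] ald'] := alm'.
have [_ ld dh _ ddz] := cA.
move=> W homW wv wb wh iota D S frW iotam iotax cW Dwv Dwb Dwh dS Swv Swb Swh.
have [gcaW hgW univW] := frW.
have [lio io1 ioM ioh] := iotam.
have [_ lD Ddeg _ _] := cW.
have [lS Sdeg Sz _] := dS.
pose s j := if deg j == q then tau (x j) else 0.
have s_tau : forall j, deg j = q -> s j = tau (x j) by move=> j e; rewrite /s e eqxx.
have s_low : forall j, (deg j <= n)%N -> s j = 0.
  by move=> j hj; rewrite /s; case: eqP => // e; exfalso; lia.
have hs : forall j, hom (deg j).-1 (s j).
  move=> j; rewrite /s; case: eqP => [e|_]; last exact: (hom0 cA).
  by rewrite e; case: (t1 _ (Sp_gen x e)).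
pose b := sum3 (fun i => al (x i)) s (fun i => d (s i)).
have homb : forall j, hom (sum3 deg (fun i => (deg i).-1) deg j) (b j).
  case => [[i|i]|i] /=.
  - exact: alh (hgx i).
  - exact: hs.
  - have := dh _ _ (hs i); rewrite prednK //; have := deg2 i; lia.
have [[F [Fm FE]] _] := univW A hom b gcaA homb.
have [lF F1 FM Fh] := Fm.
have Fwv : forall i, F (wv i) = al (x i) by move=> i; exact: (FE (inl (inl i))).
have Fwb : forall i, F (wb i) = s i by move=> i; exact: (FE (inl (inr i))).
have Fwh : forall i, F (wh i) = d (s i) by move=> i; exact: (FE (inr i)).
have Fio : forall a, F (iota a) = al a.
  have [_ uniqA] := univA A hom (fun i => al (x i)) gcaA (fun i => alh _ _ (hgx i)).
  apply: (uniqA (fun a => F (iota a)) al) => //.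
  - exact: mor_comp iotam Fm.
  - by move=> i; rewrite iotax Fwv.
have FD : forall w, F (D w) = d (F w).
  apply: (deriv_ext frW cW cA Fm).
  case => [[i|i]|i] /=.
  - by rewrite Dwv Fio ald Fwv.
  - by rewrite Dwb Fwh Fwb.
  - by rewrite Dwh (lin0 lF) Fwh ddz.
exists F; split => //.
move=> i; exists 0%N => N _.

pose dgW := sum3 deg (fun i => (deg i).-1) deg.
pose gW := sum3 wv wb wh.
pose PL (j : I + I + I) : Prop := match j with inl (inl i) => is_true (deg i <= n)%N | _ => True end.
pose HGL := HG dgW gW PL.
have homL : forall p w, HGL p w -> homW p w := HG_hom gcaW (fun j _ => hgW j).
have SS : forall w, S (S w) = 0.
  apply: (SS0 frW dS); case => [[j|j]|j] /=.
  - by rewrite Swv Swb.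
  - by rewrite Swb (S0 dS).
  - by rewrite Swh (S0 dS).
have FS_L : forall p w, HGL p w -> F (S w) = 0.
  move=> p w; elim => {p w}.
  - case => [[j|j]|j] /= hj.
    + by rewrite Swv Fwb s_low.
    + by rewrite Swb (lin0 lF).
    + by rewrite Swh (lin0 lF).
  - by rewrite (S1 frW dS) (lin0 lF).
  - by move=> p; rewrite (S0 dS) (lin0 lF).
  - by move=> p c a a' _ ea _ ea'; rewrite lS lF ea ea' scaler0 addr0.
  - move=> p r a a' ha ea ha' ea'.
    rewrite (Sder_rule _ dS (homL _ _ ha)) (linD lF) (linZ lF) !FM ea ea'.
    by rewrite mul0r mulr0 scaler0 addr0.
have E6 : forall p l, HGlow deg x n p l -> HGL p (iota l) /\ HGL p.-1 (S (iota l)).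
  move=> p l; elim => {p l}.
  - move=> j hj; rewrite iotax Swv; split.
    + exact: (@HG_gen _ _ dgW gW PL (inl (inl j)) hj).
    + exact: (@HG_gen _ _ dgW gW PL (inl (inr j)) Logic.I).
  - by rewrite io1 (S1 frW dS); split; [exact: HG_one | exact: HG_zero].
  - by move=> p; rewrite (lin0 lio) (S0 dS); split; exact: HG_zero.
  - move=> p c a a' _ [h1 h2] _ [h1' h2']; rewrite lio lS; split; exact: HG_lin.
  - move=> p r a a' _ [h1 h2] _ [h1' h2']; rewrite ioM; split; first exact: HG_mul.
    rewrite (Sder_rule _ dS (homL _ _ h1)); apply: HG_add.
    + case: p h1 h2 => [|p] h1 h2.
      * by rewrite (Sz _ (homL _ _ h1)) mul0r; exact: HG_zero.
      * by apply: (HG_cast _ (HG_mul h2 h1')); rewrite addSn.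
    + apply: HG_scale; case: r h1' h2' => [|r] h1' h2'.
      * by rewrite (Sz _ (homL _ _ h1')) mulr0; exact: HG_zero.
      * by apply: (HG_cast _ (HG_mul h1 h2')); rewrite addnS.
have tau0 : tau 0 = 0.
  have := t2 1 0 0 (Sp_zero deg x q) (Sp_zero deg x q); rewrite !scale1r addr0 => e.
  by apply: (@addrI _ (tau 0)); rewrite addr0 -e.
have E7 : forall v, Span deg x q v -> HGL q.-1 (S (iota v)) /\ F (S (iota v)) = tau v.
  move=> v; elim => {v}.
  - move=> j hj; rewrite iotax Swv Fwb s_tau //; split => //.
    apply: (HG_cast _ (@HG_gen _ _ dgW gW PL (inl (inr j)) Logic.I)).
    by rewrite /dgW /= hj.
  - by rewrite (lin0 lio) (S0 dS) (lin0 lF) tau0; split => //; exact: HG_zero.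
  - move=> c a a' sa [h1 e1] sa' [h1' e1']; rewrite lio lS lF e1 e1' t2 //.
    by split => //; exact: HG_lin.
have lT : lin_map (theta D S).
  by move=> c a a'; rewrite /theta !lS !lD !lS addrACA scalerDr.
have thetaL : forall p w, HGL p w -> HGL p (theta D S w).
  move=> p w; elim => {p w}.
  - case => [[j|j]|j] /= hj.
    + rewrite /theta Swv Dwb Dwv.
      have hm : ((deg j).+1 <= q.+1)%N by lia.
      have [l [v [hl sv ev e]]] := shape_hom frA deg2 degC nq (dh _ _ (hgx j)) hm.
      rewrite e (linD lio) (linD lS); apply: HG_add.
        exact: (@HG_gen _ _ dgW gW PL (inr j) Logic.I).
      apply: HG_add; first exact: (proj2 (E6 _ _ hl)).
      case: ev => [eq|->].
      * by have [h _] := E7 _ sv; apply: (HG_cast _ h); rewrite -eq.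
      * by rewrite (lin0 lio) (S0 dS); exact: HG_zero.
    + by rewrite /theta Swb Dwb Swh (lin0 lD) addr0; exact: HG_zero.
    + by rewrite /theta Swh Dwh (lin0 lD) (S0 dS) addr0; exact: HG_zero.
  - by rewrite /theta (S1 frW dS) (cdga_d1 cW) (lin0 lD) (S0 dS) addr0; exact: HG_zero.
  - by move=> p; rewrite (lin0 lT); exact: HG_zero.
  - by move=> p c a a' _ h _ h'; rewrite lT; exact: HG_lin.
  - move=> p r a a' ha h ha' h'.
    rewrite (theta_der frW cW dS _ (homL _ _ ha)); apply: HG_add.
    + exact: HG_mul.
    + exact: HG_mul.
have E9 : forall v, Span deg x q v -> HGL q (theta D S (iota v)).
  move=> v; elim => {v}.
  - move=> j hj; rewrite iotax /theta Swv Dwb Dwv.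
    have hm : ((deg j).+1 <= q.+1)%N by lia.
    have [l [v [hl sv ev e]]] := shape_hom frA deg2 degC nq (dh _ _ (hgx j)) hm.
    have ev0 : v = 0 by case: ev => [h|->] //; exfalso; lia.
    rewrite e ev0 addr0; apply: (HG_cast _ (HG_add (@HG_gen _ _ dgW gW PL (inr j) Logic.I)
                                               (proj2 (E6 _ _ hl)))).
    by rewrite /dgW /= hj.
  - by rewrite (lin0 lio) (lin0 lT); exact: HG_zero.
  - by move=> c a a' _ h _ h'; rewrite lio lT; exact: HG_lin.
have thetaGen : forall w, Gen dgW gW PL w -> Gen dgW gW PL (theta D S w).
  move=> w [N0 [f [hf ->]]]; exists N0, (fun k => theta D S (f k)); split.
  - by move=> k; apply: thetaL.
  - exact: lin_sum.
have FS_Gen : forall w, Gen dgW gW PL w -> F (S w) = 0.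
  move=> w [N0 [f [hf ->]]]; rewrite (lin_sum lS) (lin_sum lF) big1 // => k _.
  exact: FS_L (hf k).
have hm : ((deg i).+1 <= q.+1)%N by case: (degC i) => h; lia.
have [l [v [hl sv ev e]]] := shape_hom frA deg2 degC nq (dh _ _ (hgx i)) hm.
have Gy : Gen dgW gW PL (theta D S (iota (d (x i)))).
  rewrite e (linD lio) (linD lT); apply: GenD; apply: HG_Gen.
  - exact: thetaL (proj1 (E6 _ _ hl)).
  - exact: E9 sv.
have Giter : forall k, Gen dgW gW PL (iter k.+1 (theta D S) (iota (d (x i)))).
  elim => [|k IH] //=; exact: thetaGen.
have tv : tau v = 0.
  case: (degC i) => h.
  - by case: ev => [?|->] //; exfalso; lia.
  - apply: t3; split => //; exists i, l; split => //.
have iterE : forall k, iter k.+1 (S \o D) (wv i) = S (iter k (theta D S) (iota (d (x i)))).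
  elim => [|k IH]; first by rewrite /= Dwv.
  rewrite iterS IH /=.
  set z := iter k (theta D S) (iota (d (x i))).
  have -> : D (S z) = theta D S z - S (D z) by rewrite /theta addrK.
  by rewrite (linB lS) SS subr0.
have Fy : F (S (iota (d (x i)))) = 0.
  rewrite e (linD lio) (linD lS) (linD lF) (FS_L _ _ (proj1 (E6 _ _ hl))).
  by rewrite (proj2 (E7 _ sv)) tv addr0.
rewrite (linD lF) (linD lF) (lin_sum lF) Fwv Fwh.
rewrite big_nat_cond big1 ?addr0; last first.
  move=> k /andP [/andP [hk _] _]; case: k hk => // k _.
  rewrite (linZ lF) iterE; case: k => [|k].
  - by rewrite /= Fy scaler0.
  - by rewrite (FS_Gen _ (Giter k)) scaler0.
case: (degC i) => h.
- by rewrite s_tau // (proj2 (t1 _ (Sp_gen x h))) addrC subrK.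
- rewrite s_low // (lin0 ld) addr0.
  by have [e1 e2] := hlow (in_span1 x h); rewrite e1 e2.
Qed.
End MainC.


Unset Implicit Arguments.

Theorem lemma2p2 (A : algType rat) (hom : nat -> A -> Prop) (d : A -> A)
    (I : Type) (deg : I -> nat) (x : I -> A) (q n : nat) (al al' : A -> A) :
  is_cdga hom d ->
  is_free_gca hom deg x ->
  (forall i, (2 <= deg i)%N) ->
  (forall i, deg i = q \/ (deg i <= n)%N) ->
  (n < q)%N ->
  is_cdga_mor hom d hom d al ->
  is_cdga_mor hom d hom d al' ->
  (forall v, in_span x (fun i => (deg i <= n)%N) v -> al v = v /\ al' v = v) ->
  (forall v, in_span x (fun i => deg i = q) v ->
     exists u, (al' v - v) - (al v - v) = d u) ->
  homotopic hom d deg x al al'.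
Proof.
move=> cA frA deg2 degC nq alm alm' hlow hq.
exact: (main cA frA deg2 degC nq alm alm' hlow hq).
Qed.
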